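(* Let $(\Omega,\mathcal F,P)$ be a probability space and let $\mathcal F_1,\mathcal F_2\subset\mathcal F$ be sub-$\sigma$-fields. - (a) If $C_1\subset C_2$ are measurable and $\mathcal F_1,\mathcal F_2$ are a nonsingular pair within $C_2$, then they are a nonsingular pair within $C_1$. - (b) If $C_1,C_2,\dots$ are pairwise disjoint measurable sets with union $C$, and $\mathcal F_1,\mathcal F_2$ are a nonsingular pair within each $C_k$, then they are a nonsingular pair within $C$. - (c) Let $C$ be measurable and let $\mathcal E_1\subset\mathcal F$ be a sub-$\sigma$-field such that for every $E\in\mathcal E_1$ there exists $A\in\mathcal F_1$ with $A\cap C=E\cap C$. If $\mathcal F_1,\mathcal F_2$ are a nonsingular pair within $C$, then $\mathcal E_1,\mathcal F_2$ are a nonsingular pair within $C$.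
   Context: Let $(\Omega,\mathcal F,P)$ be a probability space and $C\in\mathcal F$. Two sub-$\sigma$-fields $\mathcal F_1,\mathcal F_2\subset\mathcal F$ are a nonsingular pair within $C$ if there exists a measurable function $f:\Omega\times\Omega\to[0,\infty)$ such that $P(A\cap B\cap C)=\int_{A\times B} f(\omega_1,\omega_2)\,P(d\omega_1)P(d\omega_2)$ for all $A\in\mathcal F_1$, $B\in\mathcal F_2$. Equivalently, there exists a measurable $g:C\times C\to[0,\infty)$ with $P(A\cap B\cap C)=\int_{(A\cap C)\times(B\cap C)} g\,dP\,dP$ for all such $A,B$. *)

(* Defs.v *)
From HB Require Import structures.
From mathcomp Require Import all_boot all_order all_algebra.
From mathcomp Require Import all_classical all_reals all_analysis.
Set Implicit Arguments. Unset Strict Implicit. Unset Printing Implicit Defensive.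
Import Order.TTheory GRing.Theory Num.Theory.
Local Open Scope classical_set_scope.
Local Open Scope ring_scope.

Definition sub_sigma_field d (T : measurableType d) (G : set (set T)) : Prop :=
  sigma_algebra setT G /\ G `<=` measurable.

Definition nonsingular_pair d (T : measurableType d) (R : realType)
  (P : probability T R) (F1 F2 : set (set T)) (C : set T) : Prop :=
  exists f : T * T -> R,
    measurable_fun setT f /\ (forall z, 0 <= f z) /\
    forall A B, F1 A -> F2 B ->
      P (A `&` B `&` C) = (\int[(P \x P)%E]_(z in A `*` B) (f z)%:E)%E.

(* Main.v *)
Require Import Defs.
From HB Require Import structures.
From mathcomp Require Import all_boot all_order all_algebra.
From mathcomp Require Import all_classical all_reals all_analysis.
From mathcomp Require Import measurable_realfun.
Set Implicit Arguments. Unset Strict Implicit. Unset Printing Implicit Defensive.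
Import Order.TTheory GRing.Theory Num.Theory.
Local Open Scope classical_set_scope.
Local Open Scope ring_scope.


Section basics.
Context (R : realType) (d : measure_display) (T : measurableType d).

Lemma ssf_setT (G : set (set T)) : sub_sigma_field G -> G setT.
Proof. by case=> -[G0 GC _] _; rewrite -(setD0 setT); exact: GC. Qed.

Lemma gmeas (G : set (set T)) : sub_sigma_field G ->
  @measurable _ (g_sigma_algebraType G) = G.
Proof. by case=> hG _; exact: sigma_algebra_id. Qed.

Lemma ssf_setI (G : set (set T)) : sub_sigma_field G -> forall A B, G A -> G B -> G (A `&` B).
Proof.
move=> hG A B; rewrite -(gmeas hG) => mA mB.
exact: (@measurableI _ (g_sigma_algebraType G)).
Qed.

Definition Qt (G1 G2 : set (set T)) :=
  (g_sigma_algebraType G1 * g_sigma_algebraType G2)%type.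

Variables (G1 G2 : set (set T)) (hs1 : sub_sigma_field G1) (hs2 : sub_sigma_field G2).

Definition rect := [set A `*` B | A in G1 & B in G2].

Lemma Qmeas : @measurable _ (Qt G1 G2) = <<s rect >>.
Proof.
rewrite measurable_prod_measurableType.
have e1 := gmeas hs1; have e2 := gmeas hs2.
by congr (<<s _ >>); rewrite e1 e2.
Qed.

Lemma rect_setI : setI_closed rect.
Proof.
move=> _ _ [A GA [B GB <-]] [A' GA' [B' GB' <-]].
rewrite -setXI; exists (A `&` A'); first exact: ssf_setI.
by exists (B `&` B') => //; exact: ssf_setI.
Qed.

Lemma QsubT (S : set (T * T)) : measurable (S : set (Qt G1 G2)) -> measurable S.
Proof.
rewrite Qmeas; apply: smallest_sub; first exact: sigma_algebra_measurable.
by move=> _ [A GA [B GB <-]]; apply: measurableX; [exact: hs1.2|exact: hs2.2].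
Qed.

Lemma rect_meas A B : G1 A -> G2 B -> measurable (A `*` B : set (Qt G1 G2)).
Proof. by move=> GA GB; rewrite Qmeas; apply: sub_sigma_algebra; exists A => //; exists B. Qed.

Local Open Scope ereal_scope.

Lemma dynkin_eq (m1 m2 : set (T * T) -> \bar R) :
  (forall S, measurable S -> m1 S \is a fin_num) ->
  (forall S, measurable S -> m2 S \is a fin_num) ->
  (forall S, measurable S -> m1 (~` S) = m1 setT - m1 S) ->
  (forall S, measurable S -> m2 (~` S) = m2 setT - m2 S) ->
  (forall F : (set (T * T))^nat, (forall n, measurable (F n)) -> trivIset setT F ->
     m1 (\bigcup_n F n) = \sum_(n <oo) m1 (F n)) ->
  (forall F : (set (T * T))^nat, (forall n, measurable (F n)) -> trivIset setT F ->
     m2 (\bigcup_n F n) = \sum_(n <oo) m2 (F n)) ->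
  (forall A B, G1 A -> G2 B -> m1 (A `*` B) = m2 (A `*` B)) ->
  forall S : set (Qt G1 G2), measurable S -> m1 S = m2 S.
Proof.
move=> f1 f2 c1 c2 u1 u2 hr S mS.
suff : measurable (S : set (T * T)) /\ m1 S = m2 S by case.
have hT : m1 setT = m2 setT.
  by rewrite -setXTT; apply: hr; [exact: ssf_setT|exact: ssf_setT].
apply: (@dynkin_induction _ (Qt G1 G2) rect
  (fun S : set (Qt G1 G2) => measurable (S : set (T * T)) /\ m1 S = m2 S)) => //.
- exact: Qmeas.
- exact: rect_setI.
- move=> _ [A GA [B GB <-]]; split; last exact: hr.
  by apply: measurableX; [exact: hs1.2|exact: hs2.2].
- move=> S' _ [mS' e]; split; first exact: measurableC.
  by rewrite c1 // c2 // e hT.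
- move=> F _ tF hF; split; first by apply: bigcup_measurable => n _; case: (hF n).
  have mF n : measurable (F n : set (T * T)) by case: (hF n).
  rewrite (u1 F mF tF).
  transitivity (\sum_(n <oo) m2 (F n)); last exact/esym/(u2 F mF tF).
  by apply: eq_eseriesr => n _; case: (hF n).
- by rewrite -Qmeas.
Qed.

End basics.


Section nullity.
Context (R : realType) (d : measure_display) (T : measurableType d) (P : probability T R).
Local Open Scope ereal_scope.

Lemma diag_meas (S : set (T * T)) : measurable S -> measurable [set w : T | S (w, w)].
Proof.
move=> mS.
have md : measurable_fun setT (fun w : T => (w, w)).
  exact: measurable_fun_pair.
by have := md measurableT S mS; rewrite setTI.
Qed.

Definition dm (C : set T) (S : set (T * T)) := P ([set w | S (w, w)] `&` C).

Lemma dm_fin C (mC : measurable C) S : measurable S -> dm C S \is a fin_num.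
Proof. by move=> mS; apply: fin_num_measure; apply: measurableI => //; exact: diag_meas. Qed.

Lemma dm_compl C (mC : measurable C) S : measurable S -> dm C (~` S) = dm C setT - dm C S.
Proof.
move=> mS; rewrite /dm.
have -> : [set w | (~` S) (w, w)] `&` C = C `\` [set w | S (w, w)].
  by apply/seteqP; split => w /= [];  tauto.
have -> : [set w | [set: T * T] (w, w)] `&` C = C by rewrite /= setTI.
have mD := diag_meas mS.
have Coo : P C < +oo by rewrite (le_lt_trans (probability_le1 _ _)) ?ltry.
by rewrite measureD // setIC.
Qed.

Lemma dm_bigcup C (mC : measurable C) (F : (set (T * T))^nat) :
  (forall n, measurable (F n)) -> trivIset setT F ->
  dm C (\bigcup_n F n) = \sum_(n <oo) dm C (F n).
Proof.
move=> mF tF; rewrite /dm.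
have -> : [set w | (\bigcup_n F n) (w, w)] `&` C = \bigcup_n ([set w | F n (w, w)] `&` C).
  by apply/seteqP; split => w /=; [move=> [[n _ h] c]; exists n | move=> [n _ [h c]]; split => //; exists n].
apply: measure_semi_bigcup.
- by move=> n; apply: measurableI => //; exact: diag_meas.
- apply/trivIsetP => i j _ _ ij; move/trivIsetP: tF => /(_ i j I I ij).
  move=> h; apply/seteqP; split => // w /= [[a _] [b _]].
  have : (F i `&` F j) (w, w) by [].
  by rewrite h.
- apply: bigcup_measurable => n _; apply: measurableI => //; exact: diag_meas.
Qed.

Variables (G1 G2 : set (set T)) (hs1 : sub_sigma_field G1) (hs2 : sub_sigma_field G2).

Lemma ns_dens C (mC : measurable C) (f : T * T -> R) :
  measurable_fun setT f -> (forall z, 0 <= f z)%R ->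
  (forall A B, G1 A -> G2 B ->
      P (A `&` B `&` C) = \int[(P \x P)%E]_(z in A `*` B) (f z)%:E) ->
  forall S : set (Qt G1 G2), measurable S ->
    dm C S = \int[(P \x P)%E]_(z in (S : set (T * T))) (f z)%:E.
Proof.
move=> mf f0 hf.
have mfE : measurable_fun [set: T * T] (fun z => (f z)%:E) by exact: measurableT_comp.
have intf : (P \x P)%E.-integrable [set: T * T] (fun z => (f z)%:E).
  apply/integrableP; split => //.
  rewrite (eq_integral (fun z => (f z)%:E)); last by move=> z _; rewrite gee0_abs ?lee_fin.
  have := hf setT setT (ssf_setT hs1) (ssf_setT hs2); rewrite setXTT => <-.
  by rewrite !setTI (le_lt_trans (probability_le1 _ _)) ?ltry.
have f2 S : measurable S -> \int[(P \x P)%E]_(z in S) (f z)%:E \is a fin_num.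
  move=> mS; apply: integrable_fin_num => //.
  exact: (integrableS measurableT mS (@subsetT _ _) intf).
apply: (dynkin_eq hs1 hs2) => //.
- exact: dm_fin.
- exact: dm_compl.
- move=> S mS.
  have e : \int[(P \x P)%E]_(z in setT) (f z)%:E =
           \int[(P \x P)%E]_(z in S) (f z)%:E + \int[(P \x P)%E]_(z in ~` S) (f z)%:E.
    rewrite -(setUv S) ge0_integral_setU //; first exact: measurableC.
    - exact: measurable_funTS.
    - by move=> z _; rewrite lee_fin.
    - by rewrite disj_set2E setICr.
  by rewrite e addeC addeK // f2.
- exact: dm_bigcup.
- move=> F mF tF; apply: ge0_integral_bigcup => //.
  + exact: measurable_funTS.
  + by move=> z _; rewrite lee_fin.
Qed.

Lemma ns_null C (mC : measurable C) : nonsingular_pair P G1 G2 C ->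
  forall S : set (Qt G1 G2), measurable S -> (P \x P)%E (S : set (T * T)) = 0 ->
  dm C S = 0.
Proof.
move=> [f [mf [f0 hf]]] S mS S0.
rewrite (ns_dens mC mf f0 hf mS); apply: null_set_integral => //.
- exact: (QsubT hs1 hs2).
- by apply: measurable_funTS; exact: measurableT_comp.
Qed.

End nullity.


Section pf.
Local Open Scope ereal_scope.
Context d1 d2 (X : measurableType d1) (Y : measurableType d2) (R : realType).
Variables (m : {finite_measure set X -> \bar R}) (f : {mfun X >-> Y}).

Definition pf := pushforward m f.

Let pf0 : pf set0 = 0.
Proof. by rewrite /pf /pushforward preimage_set0 measure0. Qed.

Let pf_ge0 A : 0 <= pf A.
Proof. exact: measure_ge0. Qed.

Let pf_sa : semi_sigma_additive pf.
Proof.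
move=> F mF tF mUF; rewrite /pf /pushforward preimage_bigcup.
apply: measure_semi_sigma_additive.
- by move=> n; exact: measurable_funPTI.
- apply/trivIsetP => /= i j _ _ ij; rewrite -preimage_setI.
  by move/trivIsetP : tF => /(_ _ _ _ _ ij) ->//; rewrite preimage_set0.
- by rewrite -preimage_bigcup; exact: measurable_funPTI.
Qed.

HB.instance Definition _ := isMeasure.Build _ _ _ pf pf0 pf_ge0 pf_sa.

Let pf_fin : fin_num_fun pf.
Proof. by move=> A mA; apply: fin_num_measure; exact: measurable_funPTI. Qed.

HB.instance Definition _ := Measure_isFinite.Build _ _ _ pf pf_fin.

End pf.

Section frestr.
Local Open Scope ereal_scope.
Context d (X : measurableType d) (R : realType).
Variables (m : {finite_measure set X -> \bar R}) (C : set X) (mC : measurable C).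

Definition frestr := mrestr m mC.

Let fr0 : frestr set0 = 0.
Proof. exact: (measure0 (mrestr m mC)). Qed.
Let fr_ge0 A : 0 <= frestr A.
Proof. exact: (measure_ge0 (mrestr m mC)). Qed.
Let fr_sa : semi_sigma_additive frestr.
Proof. rewrite /frestr; exact: measure_semi_sigma_additive. Qed.

HB.instance Definition _ := isMeasure.Build _ _ _ frestr fr0 fr_ge0 fr_sa.

Let fr_fin : fin_num_fun frestr.
Proof. by move=> A mA; rewrite /frestr /mrestr; apply: fin_num_measure; exact: measurableI. Qed.

HB.instance Definition _ := Measure_isFinite.Build _ _ _ frestr fr_fin.

End frestr.

Section maps.
Context (R : realType) (d : measure_display) (T : measurableType d).

Definition id1 (G : set (set T)) (hs : sub_sigma_field G) : T -> g_sigma_algebraType G := id.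

Lemma id1_meas G (hs : sub_sigma_field G) : measurable_fun setT (id1 hs).
Proof.
move=> _ S; rewrite (gmeas hs) setTI => GS; exact: hs.2.
Qed.

HB.instance Definition _ G hs := isMeasurableFun.Build _ _ _ _ (@id1 G hs) (id1_meas hs).

Variables (G1 G2 : set (set T)) (hs1 : sub_sigma_field G1) (hs2 : sub_sigma_field G2).

Definition idQ : T * T -> Qt G1 G2 := id.

Lemma idQ_meas : measurable_fun setT idQ.
Proof. by move=> _ S mS; rewrite setTI; exact: (QsubT hs1 hs2). Qed.

HB.instance Definition _ := isMeasurableFun.Build _ _ _ _ idQ idQ_meas.

Definition diagQ : T -> Qt G1 G2 := fun w => (w, w).

Lemma diagQ_meas : measurable_fun setT diagQ.
Proof. by move=> _ S mS; rewrite setTI; apply: diag_meas; exact: (QsubT hs1 hs2). Qed.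

HB.instance Definition _ := isMeasurableFun.Build _ _ _ _ diagQ diagQ_meas.

Variable (P : probability T R).
Local Open Scope ereal_scope.

Lemma core C (mC : measurable C) :
  (forall S : set (Qt G1 G2), measurable S -> (P \x P)%E (S : set (T * T)) = 0 ->
    dm P C S = 0) -> nonsingular_pair P G1 G2 C.
Proof.
move=> hnull.
pose lam := pf (Probability.clone _ _ _ (P \x P)%E _) idQ.
pose nu := pf (frestr P mC) diagQ.
have numu : nu `<< lam.
  move=> N lN A mA AN; apply: hnull => //; exact: lN.
have [h [h0 hfin hint hE]] := @radon_nikodym_sigma_finite _ _ _ lam nu numu.
have mh : measurable_fun setT h := measurable_int _ hint.
exists (fun z => fine (h z)); split; [|split].
- apply: measurableT_comp => //.
  exact: (measurableT_comp mh idQ_meas).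
- by move=> z; apply: fine_ge0.
move=> A B GA GB.
have mAB := rect_meas hs1 hs2 GA GB.
transitivity (nu (A `*` B)); first by [].
apply: eq_trans (hE _ mAB) _.
rewrite /lam /pf ge0_integral_pushforward //.
- transitivity (\int[(P \x P)%E]_(x in A `*` B) h x); first by [].
  by apply: eq_integral => z _; rewrite fineK.
- exact: measurable_funTS.
Qed.

End maps.


Section partab.
Context (R : realType) (d : measure_display) (T : measurableType d) (P : probability T R).
Variables (G1 G2 : set (set T)) (hs1 : sub_sigma_field G1) (hs2 : sub_sigma_field G2).
Local Open Scope ereal_scope.

Lemma part_a (C1 C2 : set T) : measurable C1 -> measurable C2 -> C1 `<=` C2 ->
  nonsingular_pair P G1 G2 C2 -> nonsingular_pair P G1 G2 C1.
Proof.
move=> mC1 mC2 C12 h2; apply: (core hs1 hs2 mC1) => S mS S0.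
have := ns_null hs1 hs2 mC2 h2 mS S0.
have mD := diag_meas (QsubT hs1 hs2 mS).
rewrite /dm => e; apply/eqP; rewrite eq_le measure_ge0 andbT -e.
apply: le_measure; rewrite ?inE; [exact: measurableI|exact: measurableI|].
by apply: setIS.
Qed.

Lemma part_b (Cs : nat -> set T) : (forall k, measurable (Cs k)) -> trivIset setT Cs ->
  (forall k, nonsingular_pair P G1 G2 (Cs k)) ->
  nonsingular_pair P G1 G2 (\bigcup_k Cs k).
Proof.
move=> mCs tCs hk.
have mC : measurable (\bigcup_k Cs k) by exact: bigcup_measurable.
apply: (core hs1 hs2 mC) => S mS S0.
have mD := diag_meas (QsubT hs1 hs2 mS).
rewrite /dm setI_bigcupr measure_semi_bigcup.
- by rewrite eseries0 // => k _ _; exact: (ns_null hs1 hs2 (mCs k) (hk k) mS S0).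
- by move=> k; exact: measurableI.
- apply/trivIsetP => i j _ _ ij; move/trivIsetP: tCs => /(_ i j I I ij) h.
  by rewrite setIACA setIid h setI0.
- by apply: bigcup_measurable => k _; exact: measurableI.
Qed.

End partab.


Section generic.
Local Open Scope ereal_scope.
Context d (Y : measurableType d) (R : realType).

Lemma mr_fin (mu : {finite_measure set Y -> \bar R}) X (mX : measurable X) S :
  measurable S -> mu (S `&` X) \is a fin_num.
Proof. by move=> mS; apply: fin_num_measure; exact: measurableI. Qed.

Lemma mr_compl (mu : {finite_measure set Y -> \bar R}) X (mX : measurable X) S :
  measurable S -> mu (~` S `&` X) = mu (setT `&` X) - mu (S `&` X).
Proof.
move=> mS.
have -> : ~` S `&` X = X `\` S by rewrite setDE setIC.
have Xoo : mu X < +oo by rewrite ltey_eq fin_num_measure.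
by rewrite measureD // setTI setIC.
Qed.

Lemma mr_bigcup (mu : {measure set Y -> \bar R}) X (mX : measurable X) (F : (set Y)^nat) :
  (forall n, measurable (F n)) -> trivIset setT F ->
  mu ((\bigcup_n F n) `&` X) = \sum_(n <oo) mu (F n `&` X).
Proof.
move=> mF tF; rewrite setI_bigcupl; apply: measure_semi_bigcup.
- by move=> n; exact: measurableI.
- apply/trivIsetP => i j _ _ ij; move/trivIsetP: tF => /(_ i j I I ij) h.
  by rewrite setIACA h set0I.
- by apply: bigcup_measurable => n _; exact: measurableI.
Qed.

Variables (mu : {measure set Y -> \bar R}) (q : Y -> \bar R).
Hypotheses (mq : measurable_fun setT q) (q0 : forall z, 0 <= q z)
  (iq : mu.-integrable setT q).

Lemma ir_fin S : measurable S -> \int[mu]_(z in S) q z \is a fin_num.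
Proof.
move=> mS; apply: integrable_fin_num => //.
exact: (integrableS measurableT mS (@subsetT _ _) iq).
Qed.

Lemma ir_compl S : measurable S ->
  \int[mu]_(z in ~` S) q z = \int[mu]_(z in setT) q z - \int[mu]_(z in S) q z.
Proof.
move=> mS.
have e : \int[mu]_(z in setT) q z = \int[mu]_(z in S) q z + \int[mu]_(z in ~` S) q z.
  rewrite -(setUv S) ge0_integral_setU //; first exact: measurableC.
  - exact: measurable_funTS.
  - by rewrite disj_set2E setICr.
by rewrite e [\int[mu]_(z in S) q z + _]addeC addeK // ir_fin.
Qed.

Lemma ir_bigcup (F : (set Y)^nat) : (forall n, measurable (F n)) -> trivIset setT F ->
  \int[mu]_(z in \bigcup_n F n) q z = \sum_(n <oo) \int[mu]_(z in F n) q z.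
Proof.
move=> mF tF; apply: ge0_integral_bigcup => //.
exact: measurable_funTS.
Qed.

End generic.

Section partc.
Context (R : realType) (d : measure_display) (T : measurableType d) (P : probability T R).
Local Open Scope ereal_scope.

Lemma cdens G (hs : sub_sigma_field G) C (mC : measurable C) :
  exists p : T -> \bar R, [/\ measurable_fun [set: T] p, G (p @^-1` [set 0]),
    (forall x, 0 <= p x), (forall x, p x \is a fin_num) &
    forall A, G A -> P (A `&` C) = \int[P]_(x in A) p x].
Proof.
pose mu := pf P (id1 hs).
pose nu := pf (frestr P mC) (id1 hs).
have numu : nu `<< mu.
  move=> N hN A mA AN.
  have mA' : measurable (A : set T) by rewrite (gmeas hs) in mA; exact: hs.2.
  have e : P A = 0 := hN A mA AN.
  apply/eqP; rewrite eq_le measure_ge0 andbT -e.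
  by apply: le_measure; [rewrite inE; exact: measurableI|rewrite inE|exact: subIsetl].
have [p [p0 pfin pint pE]] := @radon_nikodym_sigma_finite _ _ _ mu nu numu.
have mp : measurable_fun setT p := measurable_int _ pint.
exists p; split => //.
- exact: (measurableT_comp mp (id1_meas hs)).
- by have := mp measurableT [set 0] (emeasurable_set1 _); rewrite setTI (gmeas hs).
- move=> A GA.
  have mA : measurable (A : set (g_sigma_algebraType G)) by rewrite (gmeas hs).
  transitivity (nu A); first by [].
  apply: eq_trans (pE _ mA) _.
  rewrite /mu /pf ge0_integral_pushforward //.
  + exact: measurable_funTS.
Qed.

Lemma patch_ge0 (p : T -> \bar R) (D : set T) : (forall x, 0 <= p x) -> forall x, 0 <= (p \_ D) x.
Proof. by move=> p0 x; rewrite /patch; case: ifP. Qed.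

Lemma prod_int (p1 p2 : T -> \bar R) :
  measurable_fun setT p1 -> measurable_fun setT p2 ->
  (forall x, 0 <= p1 x) -> (forall x, 0 <= p2 x) ->
  forall A B, measurable A -> measurable B ->
  \int[(P \x P)%E]_(z in A `*` B) (p1 z.1 * p2 z.2) =
  \int[P]_(x in A) p1 x * \int[P]_(y in B) p2 y.
Proof.
move=> mp1 mp2 p10 p20 A B mA mB.
pose f z := (p1 \_ A) z.1 * (p2 \_ B) z.2.
have mr1 : measurable_fun setT (p1 \_ A).
  by apply/(measurable_restrictT _ _).1 => //; exact: measurable_funTS.
have mr2 : measurable_fun setT (p2 \_ B).
  by apply/(measurable_restrictT _ _).1 => //; exact: measurable_funTS.
have mf : measurable_fun setT f.
  exact: (emeasurable_funM (measurableT_comp mr1 measurable_fst) (measurableT_comp mr2 measurable_snd)).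
have f0 z : 0 <= f z by apply: mule_ge0; exact: patch_ge0.
rewrite integral_mkcond.
transitivity (\int[(P \x P)%E]_z f z).
  apply: eq_integral => z _; rewrite /f /patch in_setX.
  by case: (z.1 \in A); case: (z.2 \in B); rewrite ?mul0e ?mule0.
rewrite (@fubini_tonelli1 _ _ _ _ _ P P f mf f0).
transitivity (\int[P]_x ((p1 \_ A) x * \int[P]_y (p2 \_ B) y)).
  apply: eq_integral => x _; rewrite /fubini_F /f /=.
  by rewrite ge0_integralZl //; [move=> y _; exact: patch_ge0|exact: patch_ge0].
rewrite ge0_integralZr //; last by apply: integral_ge0 => y _; exact: patch_ge0.
- by rewrite -!integral_mkcond.
- by move=> x _; exact: patch_ge0.
Qed.

End partc.


Section partc2.
Context (R : realType) (d : measure_display) (T : measurableType d) (P : probability T R).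
Local Open Scope ereal_scope.

Lemma trace_lemma (F1 E1 F2 : set (set T)) (hs1 : sub_sigma_field F1)
  (hsE : sub_sigma_field E1) (hs2 : sub_sigma_field F2) (C : set T) :
  (forall E, E1 E -> exists A, F1 A /\ A `&` C = E `&` C) ->
  forall S : set (Qt E1 F2), measurable S ->
    exists S' : set (Qt F1 F2), measurable S' /\ S `&` (C `*` C) = S' `&` (C `*` C).
Proof.
move=> hE S mS.
apply: (@dynkin_induction _ (Qt E1 F2) (rect E1 F2)
  (fun S => exists S' : set (Qt F1 F2), measurable S' /\ S `&` (C `*` C) = S' `&` (C `*` C))).
- exact: (Qmeas hsE hs2).
- exact: (rect_setI hsE hs2).
- by exists setT; split.
- move=> _ [E GE [B GB <-]]; have [A [FA eA]] := hE E GE.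
  exists (A `*` B); split; first exact: rect_meas.
  by rewrite -!setXI eA.
- move=> S1 _ [S' [mS' e]]; exists (~` S'); split; first exact: measurableC.
  apply/seteqP; split => z [nz cz]; split => // hz; apply: nz.
  + have : (S' `&` (C `*` C)) z by split.
    by rewrite -e => -[].
  + have : (S1 `&` (C `*` C)) z by split.
    by rewrite e => -[].
- move=> F _ _ hF; have /choice [g hg] := hF.
  exists (\bigcup_n g n); split.
  + by apply: bigcup_measurable => n _; exact: (hg n).1.
  + by rewrite !setI_bigcupl; apply: eq_bigcupr => n _; exact: (hg n).2.
- by rewrite -(Qmeas hsE hs2).
Qed.

Variables (F1 F2 : set (set T)) (hs1 : sub_sigma_field F1) (hs2 : sub_sigma_field F2).

Lemma ssf_compl (G : set (set T)) : sub_sigma_field G -> forall A, G A -> G (~` A).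
Proof. by case=> -[_ GC _] _ A GA; rewrite -setTD; exact: GC. Qed.

Lemma claim C (mC : measurable C) : nonsingular_pair P F1 F2 C ->
  forall S' : set (Qt F1 F2), measurable S' ->
  (P \x P)%E ((S' : set (T * T)) `&` (C `*` C)) = 0 -> dm P C S' = 0.
Proof.
move=> ns S' mS' h0.
have [p1 [mp1 Z1 p10 p1f p1E]] := cdens P hs1 mC.
have [p2 [mp2 Z2 p20 p2f p2E]] := cdens P hs2 mC.
pose q (z : T * T) := p1 z.1 * p2 z.2.
have mq : measurable_fun setT q.
  exact: (emeasurable_funM (measurableT_comp mp1 measurable_fst) (measurableT_comp mp2 measurable_snd)).
have q0 z : 0 <= q z by apply: mule_ge0.
have mCC : measurable (C `*` C) by exact: measurableX.
have rectq A B : F1 A -> F2 B ->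
    (P \x P)%E ((A `*` B) `&` (C `*` C)) = \int[(P \x P)%E]_(z in A `*` B) q z.
  move=> FA FB.
  have mA := hs1.2 _ FA; have mB := hs2.2 _ FB.
  rewrite -setXI product_measure1E; [|exact: measurableI|exact: measurableI].
  by rewrite prod_int // -p1E // -p2E.
have iq : (P \x P)%E.-integrable setT q.
  apply/integrableP; split => //.
  rewrite (eq_integral q); last by move=> z _; rewrite gee0_abs.
  rewrite -setXTT -rectq; [|exact: ssf_setT|exact: ssf_setT].
  have mm : measurable ((@setT T `*` @setT T) `&` (C `*` C)) by apply: measurableI; [exact: measurableX|exact: mCC].
  by rewrite (le_lt_trans (probability_le1 _ mm)) ?ltry.
have eqi : forall S : set (Qt F1 F2), measurable S ->
    (P \x P)%E ((S : set (T * T)) `&` (C `*` C)) = \int[(P \x P)%E]_(z in (S : set (T * T))) q z.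
  apply: (dynkin_eq hs1 hs2).
  - by move=> S mS; exact: (mr_fin (Probability.clone _ _ _ (P \x P)%E _) mCC mS).
  - by move=> S mS; exact: (ir_fin iq mS).
  - by move=> S mS; exact: (mr_compl (Probability.clone _ _ _ (P \x P)%E _) mCC mS).
  - by move=> S mS; exact: (ir_compl mq q0 iq).
  - by move=> F mF tF; exact: (mr_bigcup _ mCC mF tF).
  - by move=> F mF tF; exact: (ir_bigcup _ mq q0 mF tF).
  - exact: rectq.
have PZ1 : P (p1 @^-1` [set 0] `&` C) = 0.
  rewrite p1E //; rewrite (eq_integral (fun _ => 0)) ?integral0 // => x.
  by rewrite inE => /= ->.
have PZ2 : P (p2 @^-1` [set 0] `&` C) = 0.
  rewrite p2E //; rewrite (eq_integral (fun _ => 0)) ?integral0 // => x.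
  by rewrite inE => /= ->.
pose W := (S' : set (T * T)) `&` ((~` (p1 @^-1` [set 0])) `*` (~` (p2 @^-1` [set 0]))).
have mWQ : measurable (W : set (Qt F1 F2)).
  apply: measurableI => //; apply: rect_meas => //; exact: ssf_compl.
have mW : measurable W := QsubT hs1 hs2 mWQ.
have mS'T : measurable (S' : set (T * T)) := QsubT hs1 hs2 mS'.
have iW0 : \int[(P \x P)%E]_(z in W) q z = 0.
  rewrite -eqi //; apply/eqP; rewrite eq_le measure_ge0 andbT -h0.
  apply: le_measure; rewrite ?inE; [exact: measurableI|exact: measurableI|].
  by apply: setSI; exact: subIsetl.
have lW0 : (P \x P)%E W = 0.
  have iW0' : \int[(P \x P)%E]_(z in W) `|q z| = 0.
    by rewrite -iW0; apply: eq_integral => z _; rewrite gee0_abs.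
  have [N [mN N0 WN]] := (ae_eq_integral_abs _ mW (measurable_funTS mq)).1 iW0'.
  apply/eqP; rewrite eq_le measure_ge0 andbT -N0.
  apply: le_measure; rewrite ?inE //.
  move=> z Wz; apply: WN => /(_ Wz) /eqP.
  case: Wz => _ [/= n1 n2].
  rewrite /q mule_eq0 => /orP [] /eqP; [exact: n1|exact: n2].
have dW0 : dm P C W = 0 := ns_null hs1 hs2 mC ns mWQ lW0.
apply/eqP; rewrite eq_le measure_ge0 andbT.
have mD := diag_meas mS'T.
have mDW := diag_meas mW.
have mZ1 : measurable (p1 @^-1` [set 0]) by have := mp1 measurableT [set 0] (emeasurable_set1 _); rewrite setTI.
have mZ2 : measurable (p2 @^-1` [set 0]) by have := mp2 measurableT [set 0] (emeasurable_set1 _); rewrite setTI.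
pose Z1C := p1 @^-1` [set 0] `&` C.
pose Z2C := p2 @^-1` [set 0] `&` C.
pose DW := [set w | W (w, w)] `&` C.
have mZ1C : measurable Z1C by exact: measurableI.
have mZ2C : measurable Z2C by exact: measurableI.
have mDWC : measurable DW by exact: measurableI.
have PZ1' : P Z1C = 0 := PZ1.
have PZ2' : P Z2C = 0 := PZ2.
have PDW : P DW = 0 := dW0.
apply: (@le_trans _ _ (P ((DW `|` Z1C) `|` Z2C))).
  apply: le_measure; rewrite ?inE.
  - exact: measurableI.
  - by apply: measurableU => //; apply: measurableU.
  - move=> w [Sw Cw].
    have [h1|h1] := eqVneq (p1 w) 0; first by left; right.
    have [h2|h2] := eqVneq (p2 w) 0; first by right.
    left; left; split => //; split => //; split => /= /eqP; [exact/negP|exact/negP].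
have e1 : P ((DW `|` Z1C) `|` Z2C) = P (DW `|` Z1C).
  by apply: measureU0 => //; exact: measurableU.
have e2 : P (DW `|` Z1C) = P DW by apply: measureU0.
have h : P DW <= 0 by rewrite PDW.
by rewrite e1 e2.
Qed.

Lemma part_c (C : set T) (E1 : set (set T)) : measurable C -> sub_sigma_field E1 ->
  (forall E, E1 E -> exists A, F1 A /\ A `&` C = E `&` C) ->
  nonsingular_pair P F1 F2 C -> nonsingular_pair P E1 F2 C.
Proof.
move=> mC hsE hE ns.
apply: (core hsE hs2 mC) => S mS S0.
have [S' [mS' e]] := trace_lemma hs1 hsE hs2 hE mS.
have eD : dm P C S = dm P C S'.
  rewrite /dm; congr (P _); apply/seteqP; split => w [h c]; split => //.
  + have : (S `&` (C `*` C)) (w, w) by split.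
    by rewrite e => -[].
  + have : (S' `&` (C `*` C)) (w, w) by split.
    by rewrite -e => -[].
rewrite eD; apply: (claim mC ns mS').
have mST := QsubT hsE hs2 mS.
rewrite -e; apply/eqP; rewrite eq_le measure_ge0 andbT -S0.
apply: le_measure; rewrite ?inE //; first (apply: measurableI => //; exact: measurableX).
Qed.

End partc2.


Unset Implicit Arguments. Set Strict Implicit. Set Printing Implicit Defensive.

Theorem lemma5p6 (R : realType) (d : measure_display) (T : measurableType d)
  (P : probability T R) (F1 F2 : set (set T))
  (hF1 : sub_sigma_field F1) (hF2 : sub_sigma_field F2) :
  (* (a) *)
  (forall C1 C2 : set T, measurable C1 -> measurable C2 -> C1 `<=` C2 ->
     nonsingular_pair P F1 F2 C2 -> nonsingular_pair P F1 F2 C1) /\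
  (* (b) *)
  (forall Cs : nat -> set T,
     (forall k, measurable (Cs k)) -> trivIset setT Cs ->
     (forall k, nonsingular_pair P F1 F2 (Cs k)) ->
     nonsingular_pair P F1 F2 (\bigcup_k Cs k)) /\
  (* (c) *)
  (forall (C : set T) (E1 : set (set T)), measurable C -> sub_sigma_field E1 ->
     (forall E, E1 E -> exists A, F1 A /\ A `&` C = E `&` C) ->
     nonsingular_pair P F1 F2 C -> nonsingular_pair P E1 F2 C).
Proof.
split; [|split].
- move=> C1 C2 mC1 mC2 C12; exact: (part_a hF1 hF2 mC1 mC2 C12).
- move=> Cs mCs tCs hk; exact: (part_b hF1 hF2 mCs tCs hk).
- move=> C E1 mC hsE hE ns; exact: (part_c hF1 hF2 mC hsE hE ns).
Qed.
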